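(* For every integer $n\ge1$, every $\beta\in[\tfrac12,1]$ and every $x\in\mathbb{R}^n$ with $|x_1|\ge|x_2|\ge\dots\ge|x_n|$, $$\sum_{i=1}^n|x_i|^{\frac{2-\beta}{\beta}}\left(i+\sum_{j>i}\frac{|x_j|}{|x_i|}\right)\le n^\beta\cdot\left(\sum_{i=1}^n|x_i|^{\frac1\beta}\right)^{2-\beta},$$ with equality for $x=c\mathbf{1}$ for any $c\neq0$. *)

(* Defs.v *)
From HB Require Import structures.
From mathcomp Require Import all_boot all_order all_algebra.
From mathcomp Require Import all_classical all_reals all_analysis.
Set Implicit Arguments. Unset Strict Implicit. Unset Printing Implicit Defensive.
Import Order.TTheory GRing.Theory Num.Theory.
Local Open Scope ring_scope.

(* Indices are 0-based: the paper's index i corresponds to (i : 'I_n) with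
   value i-1, hence the coefficient i.+1 below. *)
Definition lemma2_lhs (R : realType) (n : nat) (beta : R) (x : 'I_n -> R) : R :=
  \sum_(i < n) `|x i| `^ ((2 - beta) / beta) *
     ((i.+1)%:R + \sum_(j < n | (i < j)%N) `|x j| / `|x i|).

Definition lemma2_rhs (R : realType) (n : nat) (beta : R) (x : 'I_n -> R) : R :=
  (n%:R) `^ beta * (\sum_(i < n) `|x i| `^ (1 / beta)) `^ (2 - beta).

(* Main.v *)
Require Import Defs.
From HB Require Import structures.
From mathcomp Require Import all_boot all_order all_algebra.
From mathcomp Require Import all_classical all_reals all_analysis.
From mathcomp Require Import ring lra.
Import Order.TTheory GRing.Theory Num.Theory.
Local Open Scope ring_scope.

Lemma count_le (R : realType) n (i : 'I_n) :
  \sum_(j < n | ~~ (i < j)%N) (1:R) = i.+1%:R.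
Proof.
under eq_bigl => j do rewrite -leqNgt -ltnS.
rewrite -(big_ord_widen n (fun _ => (1:R)) (ltn_ord i)).
by rewrite sumr_const card_ord.
Qed.

Lemma term_bound (R : realType) n (beta : R) (hb : 1/2 <= beta <= 1)
  (a : 'I_n -> R) (a0 : forall i, 0 <= a i)
  (amono : forall i j : 'I_n, (i <= j)%N -> a j <= a i) (i : 'I_n) :
  a i `^ ((2 - beta)/beta) * ((i.+1)%:R + \sum_(j < n | (i < j)%N) a j / a i)
  <= \sum_(j < n) a i `^ (1/beta) * a j `^ (1/beta - 1).
Proof.
case/andP: hb => hb1 hb2.
have b0 : 0 < beta by lra.
have bn0 : beta != 0 by rewrite gt_eqF.
have q0 : 0 <= 1/beta - 1.
  rewrite subr_ge0 ler_pdivlMr //; lra.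
have q1 : 0 <= 1 - (1/beta - 1).
  rewrite subr_ge0 lerBlDr ler_pdivrMr //; lra.
have He : (2 - beta)/beta = 1/beta + (1/beta - 1) by field.
have [ai0|aipos] := eqVneq (a i) 0.
  rewrite ai0 powR0 ?mul0r; last by rewrite He; apply/negP => /eqP H; move: q0 b0; lra.
  by apply: sumr_ge0 => j _; rewrite mulr_ge0 ?powR_ge0.
have ai_gt0 : 0 < a i by rewrite lt_neqAle eq_sym aipos a0.
rewrite [X in _ <= X](bigID (fun j : 'I_n => (i < j)%N)) /= addrC mulrDr mulr_sumr.
apply: lerD.
  rewrite -count_le mulr_sumr mulr1; apply: ler_sum => j hj.
  rewrite He powRD; last by rewrite aipos implybT.
  rewrite ler_wpM2l ?powR_ge0 //; apply: ge0_ler_powR => //; rewrite ?nnegrE //.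
  by apply: amono; rewrite leqNgt.
apply: ler_sum => j hj.
have Ha : a j = a j `^ (1/beta - 1) * a j `^ (1 - (1/beta - 1)).
  rewrite -powRD; first by rewrite (addrC (1/beta - 1)) subrK powRr1.
  by rewrite (addrC (1/beta - 1)) subrK oner_eq0.
have Hai : a i `^ ((2 - beta)/beta) = a i `^ ((2 - beta)/beta - 1) * a i.
  by rewrite -{3}(powRr1 (a0 i)) -powRD ?subrK // aipos implybT.
rewrite Hai -mulrA [a i * _]mulrCA mulfV // mulr1 {1}Ha mulrA.
have -> : a i `^ (1 / beta) = a i `^ ((2 - beta)/beta - 1) * a i `^ (1 - (1/beta - 1)).
  rewrite -powRD ?aipos ?implybT //; congr (_ `^ _); by field.
rewrite [X in _ <= X]mulrAC; apply: ler_wpM2l; first by rewrite mulr_ge0 ?powR_ge0.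
apply: ge0_ler_powR => //; rewrite ?nnegrE //; apply: amono; exact: ltnW.
Qed.

Lemma power_mean (R : realType) n (hn : (0 < n)%N) (beta : R) (hb : 1/2 <= beta <= 1)
  (a : 'I_n -> R) (a0 : forall i, 0 <= a i)
  (Spos : 0 < \sum_(j < n) a j `^ (1/beta)) :
  \sum_(j < n) a j `^ (1/beta - 1) <=
    n%:R `^ beta * (\sum_(j < n) a j `^ (1/beta)) `^ (1 - beta).
Proof.
case/andP: hb => hb1 hb2.
have b0 : 0 < beta by lra.
have bn0 : beta != 0 by rewrite gt_eqF.
have n0 : 0 < n%:R :> R by rewrite ltr0n.
set S := \sum_(j < n) _ in Spos *.
have [b1|b1] := eqVneq beta 1.
  rewrite b1 divr1 subrr; under eq_bigr do rewrite powRr0.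
  by rewrite sumr_const card_ord powRr0 mulr1 powRr1 ?ler0n.
have r0 : 0 < 1 - beta by rewrite subr_gt0 lt_neqAle b1 hb2.
set M := (S / n%:R) `^ beta.
have M0 : 0 < M by rewrite powR_gt0 // divr_gt0.
have HM : M `^ (beta^-1) = S / n%:R.
  by rewrite /M -powRrM mulfV // powRr1 // divr_ge0 ?ler0n // ltW.
have Hy : forall j, a j `^ (1/beta - 1) * M <= (1 - beta) * a j `^ (1/beta) + beta * (S / n%:R).
  move=> j.
  have := @conjugate_powR R (a j `^ (1/beta - 1)) M ((1 - beta)^-1) beta^-1
     (powR_ge0 _ _) (ltW M0) _ _ _.
  rewrite HM -powRrM !invrK.
  have -> : (1 / beta - 1) * (1 - beta)^-1 = 1/beta.
    by field; rewrite bn0 /= subr_eq0 eq_sym b1.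
  move=> H; rewrite [(1 - beta) * _]mulrC [beta * _]mulrC; apply: H.
  - by rewrite invr_gt0.
  - by rewrite invr_gt0.
  - by rewrite subrK.
have H1 : \sum_(j < n) a j `^ (1/beta - 1) * M <= S.
  apply: le_trans (ler_sum _ (fun j _ => Hy j)) _.
  rewrite big_split /= -mulr_sumr sumr_const card_ord.
  rewrite -/S -[X in _ + X <= _]mulr_natr -mulrA divfK ?gt_eqF //; lra.
rewrite -mulr_suml -ler_pdivlMr // in H1.
apply: le_trans H1 _.
have HMe : M = S `^ beta / n%:R `^ beta.
  rewrite /M powRM ?invr_ge0 ?ler0n ?(ltW Spos) //.
  by rewrite -powR_inv1 ?ler0n // -powRrM mulN1r powRN.
rewrite HMe invf_div mulrA mulrC powRB; last by rewrite (gt_eqF Spos) implybT.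
by rewrite powRr1 ?(ltW Spos) // mulrC mulrA [_ * S]mulrC.
Qed.

Theorem lemma2 (R : realType) (n : nat) (hn : (1 <= n)%N) (beta : R)
  (hbeta : 1 / 2 <= beta <= 1) :
  (forall x : 'I_n -> R,
      (forall i j : 'I_n, (i <= j)%N -> `|x j| <= `|x i|) ->
      lemma2_lhs beta x <= lemma2_rhs beta x) /\
  (forall c : R, c != 0 -> lemma2_lhs beta (fun _ : 'I_n => c) = lemma2_rhs beta (fun _ : 'I_n => c)).
Proof.
have hb := hbeta; case/andP: hbeta => hb1 hb2.
have b0 : 0 < beta by lra.
have bn0 : beta != 0 by rewrite gt_eqF.
split.
  move=> x hx.
  pose a := fun i : 'I_n => `|x i|.
  have a0 : forall i, 0 <= a i by move=> i; exact: normr_ge0.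
  rewrite /lemma2_lhs /lemma2_rhs.
  apply: le_trans (ler_sum _ (fun i _ => @term_bound R n beta hb a a0 hx i)) _.
  under eq_bigr do rewrite -mulr_sumr.
  rewrite -mulr_suml.
  set S := \sum_(i < n) _.
  have S0 : 0 <= S by apply: sumr_ge0 => i _; exact: powR_ge0.
  have [Sz|Snz] := eqVneq S 0.
    by rewrite Sz mul0r mulr_ge0 ?powR_ge0.
  have Spos : 0 < S by rewrite lt_neqAle eq_sym Snz S0.
  apply: le_trans (ler_wpM2l S0 (@power_mean R n hn beta hb a a0 Spos)) _.
  rewrite -/S mulrCA -{1}(powRr1 S0) -powRD; last by rewrite Snz implybT.
  by rewrite addrA (_ : 1 + 1 = 2 :> R) // -natrD.
move=> c c0.
have a0 : 0 < `|c| by rewrite normr_gt0.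
rewrite /lemma2_lhs /lemma2_rhs.
under eq_bigr => i _.
  rewrite (eq_bigr (fun _ => 1)); last by move=> j _; rewrite mulfV ?gt_eqF.
  have -> : i.+1%:R + \sum_(j < n | (i < j)%N) (1:R) = n%:R.
    have E : \sum_(j < n) (1:R) = n%:R by rewrite sumr_const card_ord.
    by rewrite -count_le addrC -E [RHS](bigID (fun j : 'I_n => (i < j)%N)).
  over.
rewrite sumr_const card_ord sumr_const card_ord.
set m := (n%:R : R).
have L : forall y : R, y *+ n = y * m by move=> y; rewrite mulr_natr.
rewrite !L powRM ?ler0n ?powR_ge0 // mulrCA -powRD; last by apply/implyP => _; rewrite /m pnatr_eq0 -lt0n.
rewrite (addrC beta (2 - beta)) subrK -powRrM (powR_mulrn 2) ?ler0n //.
have -> : 1 / beta * (2 - beta) = (2 - beta) / beta by field.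
by rewrite -mulrA -expr2.
Qed.
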